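(* For any finite simple graph $G$ on $n$ vertices with $c(G)$ connected components, $\mathrm{mur}(G)\le n-c(G)$.
   Context: For a finite simple undirected graph $G$ on vertices $v_1,\dots,v_n$, let $A_G$ be its $(0,1)$-adjacency matrix, $D_G=\mathrm{diag}(d_1,\dots,d_n)$ with $d_i$ the degree of $v_i$, $I$ the $n\times n$ identity matrix and $J$ the $n\times n$ all-ones matrix. A universal adjacency matrix of $G$ is any matrix $\alpha A_G+\beta I+\gamma J+\delta D_G$ with real scalars $\alpha,\beta,\gamma,\delta$ and $\alpha\neq 0$. The minimum universal rank $\mathrm{mur}(G)$ is the minimum rank over all universal adjacency matrices of $G$. *)

(* Defs.v *)
From HB Require Import structures.
From mathcomp Require Import all_boot all_order all_algebra.
From mathcomp Require Import boolp reals.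
Set Implicit Arguments. Unset Strict Implicit. Unset Printing Implicit Defensive.
Import Order.TTheory GRing.Theory Num.Theory.
Local Open Scope ring_scope.

Definition simple_graph (n : nat) (e : rel 'I_n) : Prop :=
  symmetric e /\ irreflexive e.

Definition degree (n : nat) (e : rel 'I_n) (i : 'I_n) : nat := #|[set j | e i j]|.

Definition adjmx (R : pzRingType) (n : nat) (e : rel 'I_n) : 'M[R]_n :=
  \matrix_(i, j) (e i j)%:R.

Definition degmx (R : pzRingType) (n : nat) (e : rel 'I_n) : 'M[R]_n :=
  diag_mx (\row_i (degree e i)%:R).

Definition onesmx (R : pzRingType) (n : nat) : 'M[R]_n := const_mx 1.

Definition univ_adj (R : pzRingType) (n : nat) (e : rel 'I_n) (a b c d : R) : 'M[R]_n :=
  a *: adjmx R e + b%:M + c *: onesmx R n + d *: degmx R e.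

Definition is_univ_rank (R : fieldType) (n : nat) (e : rel 'I_n) (k : nat) : Prop :=
  exists a b c d : R, a != 0 /\ \rank (univ_adj e a b c d) = k.

Lemma univ_rank_ex (R : fieldType) (n : nat) (e : rel 'I_n) :
  exists k, `[< @is_univ_rank R n e k >].
Proof.
exists (\rank (univ_adj e (1 : R) 0 0 0)); apply/asboolP.
by exists 1, 0, 0, 0; split; [exact: oner_neq0|].
Qed.

Definition mur (R : fieldType) (n : nat) (e : rel 'I_n) : nat :=
  ex_minn (@univ_rank_ex R n e).

Definition ncomp (n : nat) (e : rel 'I_n) : nat := n_comp e 'I_n.

(* Main.v *)
Require Import Defs.
From HB Require Import structures.
From mathcomp Require Import all_boot all_order all_algebra.
From mathcomp Require Import boolp reals.
From mathcomp Require Import zify.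
Set Implicit Arguments. Unset Strict Implicit. Unset Printing Implicit Defensive.
Import Order.TTheory GRing.Theory Num.Theory.
Local Open Scope ring_scope.

Theorem theorem3 (R : realType) (n : nat) (e : rel 'I_n) :
  simple_graph e -> (mur R e <= n - ncomp e)%N.
Proof.
move=> [sym_e irr_e].
have csym : connect_sym e by exact: sym_connect_sym.
set L := univ_adj e (-1 : R) 0 0 1.
have murL : (mur R e <= \rank L)%N.
  rewrite /mur; case: ex_minnP => m _ Hm; apply: Hm; apply/asboolP.
  by exists (-1), 0, 0, 1; split; rewrite ?oppr_eq0 ?oner_neq0.
set S := [set x | roots e x].
have cS : ncomp e = #|S|.
  by rewrite /ncomp /n_comp_mem; apply: eq_card => x; rewrite !inE andbT.
pose v (i : 'I_#|S|) := enum_val i.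
have vS i : fingraph.root e (v i) = v i.
  by have := enum_valP i; rewrite inE => /eqP.
pose K : 'M[R]_(#|S|, n) := \matrix_(i, j) (fingraph.root e j == v i)%:R.
pose P : 'M[R]_(n, #|S|) := \matrix_(j, i) (j == v i)%:R.
have KP : K *m P = 1%:M.
  apply/matrixP => i k; rewrite !mxE (bigD1 (v k)) //= big1 ?addr0.
    rewrite !mxE eqxx mulr1 vS; case: (i =P k) => [->|ne].
      by rewrite eqxx.
    case: eqP => // /enum_val_inj E; by case: ne.
  move=> j /negbTE nj; by rewrite !mxE nj mulr0.
have rK : \rank K = #|S|.
  apply/eqP; rewrite eqn_leq rank_leq_row /=.
  by rewrite -{1}(mxrank1 R #|S|) -KP mxrankM_maxl.
have KL : K *m L = 0.
  apply/matrixP => i k; rewrite !mxE.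
  have LE j : L j k = - (e j k)%:R + (degree e j)%:R *+ (j == k).
    rewrite /L /univ_adj /adjmx /degmx /onesmx !mxE.
    by rewrite mulN1r mul0rn mul0r !addr0 mul1r.
  under eq_bigr => j _ do rewrite LE mulrDr.
  rewrite big_split /= [X in _ + X](bigD1 k) //= [X in _ + (_ + X)]big1 ?addr0; last first.
    by move=> j /negbTE nj; rewrite nj mulr0n mulr0.
  rewrite eqxx mulr1n mxE.
  have -> : \sum_j K i j * - (e j k)%:R = - ((fingraph.root e k == v i)%:R * (degree e k)%:R).
    under eq_bigr => j _ do rewrite mxE mulrN.
    rewrite sumrN; congr (- _).

    rewrite /degree -sum1_card natr_sum big_distrr /= [RHS]big_mkcond /=.
    apply: eq_bigr => j _; rewrite inE.
    case ejk: (e j k).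
      have ekj : e k j by rewrite sym_e.
      have -> : fingraph.root e j = fingraph.root e k by apply/(fingraph.rootP csym); rewrite connect1.
      by rewrite ekj.
    have -> : e k j = false by rewrite sym_e ejk.
    by rewrite mulr0n mulr0.
  by rewrite addrC subrr.
have : (K <= kermx L)%MS by apply/sub_kermxP.
move/mxrankS; rewrite mxrank_ker rK => H.
rewrite cS; apply: (leq_trans murL).
have := rank_leq_row L; move: H; lia.
Qed.
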